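(* Let $A\in M_n$. Suppose that for every $c\in\mathbb{R}^n$ the $c$-numerical range $W_c(A)$ is a closed circular disc centered at $0$ (possibly of radius $0$). Then $A$ is nilpotent.
   Context: $M_n$ denotes the space of $n\times n$ complex matrices. For $c=(c_1,\dots,c_n)^t\in\mathbb{R}^n$, the $c$-numerical range of $A\in M_n$ is $W_c(A)=\{\sum_{j=1}^n c_jx_j^*Ax_j:\ x_1,\dots,x_n\in\mathbb{C}^n\text{ orthonormal}\}$. *)

(* Defs.v *)
(* Complex matrices are taken over an arbitrary
   numClosedFieldType C (an algebraically closed field with conjugation,
   order and norm; the complex numbers are the model of interest). *)
From HB Require Import structures.
From mathcomp Require Import all_boot all_order all_algebra.
Set Implicit Arguments. Unset Strict Implicit. Unset Printing Implicit Defensive.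
Import Order.TTheory GRing.Theory Num.Theory.
Local Open Scope ring_scope.

Definition adjv (C : numClosedFieldType) (n : nat) (x : 'cV[C]_n) : 'rV[C]_n :=
  (map_mx Num.conj x)^T.

Definition orthonormal_family (C : numClosedFieldType) (n : nat)
  (x : 'I_n -> 'cV[C]_n) : Prop :=
  forall i j : 'I_n, (adjv (x i) *m x j) 0 0 = (i == j)%:R.

Definition real_vec (C : numClosedFieldType) (n : nat) (c : 'I_n -> C) : Prop :=
  forall j, c j \is Num.real.

Definition c_numrange (C : numClosedFieldType) (n : nat) (c : 'I_n -> C)
  (A : 'M[C]_n) (z : C) : Prop :=
  exists x : 'I_n -> 'cV[C]_n, orthonormal_family x /\
    z = \sum_(j < n) c j * (adjv (x j) *m A *m x j) 0 0.

Definition is_closed_disc0 (C : numClosedFieldType) (S : C -> Prop) : Prop :=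
  exists r : C, 0 <= r /\ forall z : C, S z <-> `|z| <= r.

Definition mx_nilpotent (C : numClosedFieldType) (n : nat) (A : 'M[C]_n) : Prop :=
  exists k : nat, A ^+ k = 0.

(* Main.v *)
Require Import Defs.
From HB Require Import structures.
From mathcomp Require Import all_boot all_order all_algebra.
From mathcomp Require Import ring.
Set Implicit Arguments. Unset Strict Implicit. Unset Printing Implicit Defensive.
Import Order.TTheory GRing.Theory Num.Theory.
Local Open Scope ring_scope.

Lemma conj_powmx (R : comUnitRingType) n (P M : 'M[R]_n.+1) m :
  P \in unitmx -> (P *m M *m invmx P) ^+ m = P *m M ^+ m *m invmx P.
Proof.
move=> Pu; elim: m => [|m IH].
  by rewrite !expr0 mulmx1 mulmxV.
rewrite !exprS IH -!mulmxE !mulmxA mulmxKV //.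
Qed.

Lemma trig_mul (R : comNzRingType) n (S T : 'M[R]_n) :
  is_trig_mx S -> is_trig_mx T ->
  is_trig_mx (S *m T) /\ forall i, (S *m T) i i = S i i * T i i.
Proof.
move=> /is_trig_mxP HS /is_trig_mxP HT; split.
  apply/is_trig_mxP => i j lij; rewrite mxE big1 // => k _.
  case: (ltnP i k) => ik; first by rewrite HS // mul0r.
  by rewrite HT ?mulr0 // (leq_ltn_trans ik lij).
move=> i; rewrite mxE (bigD1 i) //= big1 ?addr0 // => k kni.
case: (ltngtP i k) => ik; first by rewrite HS // mul0r.
  by rewrite HT ?mulr0.
by move: kni; rewrite (val_inj ik) eqxx.
Qed.

Lemma trig_pow (R : comNzRingType) n (T : 'M[R]_n.+1) m :
  is_trig_mx T -> is_trig_mx (T ^+ m) /\ forall i, (T ^+ m) i i = T i i ^+ m.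
Proof.
move=> HT; elim: m => [|m [IH1 IH2]].
  split; first by rewrite expr0 scalar_mx_is_trig.
  by move=> i; rewrite expr0 !mxE eqxx.
rewrite exprS -mulmxE; have [H1 H2] := trig_mul HT IH1; split => // i.
by rewrite H2 IH2 exprS.
Qed.

Section Nil.
Variable C : numClosedFieldType.

Lemma diag_zero n (lam : 'I_n.+1 -> C) :
  (forall m, (0 < m)%N -> \sum_i lam i ^+ m = 0) -> forall i, lam i = 0.
Proof.
move=> Hs i0; apply/eqP; apply/negPn/negP => nz.
set l := lam i0.
pose f : {poly C} := 'X * \prod_(i | lam i != l) ('X - (lam i)%:P).
have H1 : \sum_i f.[lam i] = 0.
  under eq_bigr => i _ do rewrite horner_coef.
  rewrite exchange_big /=.
  case Hs0 : (size f) => [|s]; first by rewrite big_ord0.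
  rewrite big_ord_recl /= big1 ?add0r; last first.
    by move=> i _; rewrite coefXM /= mul0r.
  apply: big1 => k _; rewrite -mulr_sumr Hs ?mulr0 //.
have H2 : \sum_i f.[lam i] = \sum_(i | lam i == l) f.[l].
  rewrite (bigID (fun i => lam i == l)) /= addrC big1 ?add0r.
    by apply: eq_bigr => i /eqP ->.
  move=> i ni; rewrite hornerM horner_prod (bigD1 i) //= !hornerE subrr.
  by rewrite /= mulr0 mul0r.
have H3 : f.[l] != 0.
  rewrite hornerM horner_prod hornerX mulf_eq0 negb_or nz /=.
  rewrite prodf_seq_neq0; apply/allP => i _; apply/implyP => Hi.
  by rewrite !hornerE subr_eq0 eq_sym.
move: H1; rewrite H2 sumr_const => /eqP; rewrite -mulr_natl mulf_eq0 (negPf H3) orbF.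
rewrite pnatr_eq0 => /eqP Hc.
have : i0 \in [pred i | lam i == l] by rewrite inE.
by move/card0_eq: Hc => ->.
Qed.

Lemma nil_of_traces n (A : 'M[C]_n.+1) :
  (forall m, (0 < m)%N -> \tr (A ^+ m) = 0) -> A ^+ n.+1 = 0.
Proof.
move=> Htr; have [P Pu] := Schur A (ltn0Sn n).
have Pun : P \in unitmx by apply: unitarymx_unit.
rewrite /similar_to /= conjumx // => Tt.
set T := P *m A *m invmx P in Tt.
have HT : forall i, T i i = 0.
  apply: diag_zero => m m0; have [_ H] := trig_pow m Tt.
  under eq_bigr => i _ do rewrite -H.
  rewrite -/(\tr _) conj_powmx // mxtrace_mulC mulmxA mulVmx // mul1mx.
  exact: Htr.
have : horner_mx T (char_poly T) = 0 by apply: Cayley_Hamilton.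
rewrite char_poly_trig // (eq_bigr (fun _ => 'X)); last first.
  by move=> i _; rewrite HT subr0.
rewrite prodr_const card_ord rmorphXn /= horner_mx_X /T conj_powmx // => H.
have : invmx P *m (P *m A ^+ n.+1 *m invmx P) *m P = 0 by rewrite H mulmx0 mul0mx.
by rewrite !mulmxA mulVmx // mul1mx mulmxKV.
Qed.
End Nil.


Section P2.
Variable C : numClosedFieldType.

Definition cpt (k : nat) : C := (k%:R + 'i) / (k%:R - 'i).

Lemma cpt_prod k : ((k%:R - 'i) * (k%:R + 'i) : C) != 0.
Proof.
have -> : ((k%:R - 'i) * (k%:R + 'i) : C) = k%:R ^+ 2 + 1.
  by rewrite mulrDr !mulrBl -expr2 sqrCi; rewrite (mulrC 'i); ring.
by rewrite gt_eqF // ltr_pwDr // exprn_ge0.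
Qed.

Lemma cpt_den k : (k%:R - 'i : C) != 0.
Proof. by have := cpt_prod k; rewrite mulf_eq0 negb_or => /andP[]. Qed.

Lemma cpt_num k : (k%:R + 'i : C) != 0.
Proof. by have := cpt_prod k; rewrite mulf_eq0 negb_or => /andP[]. Qed.

Lemma cpt_norm k : `|cpt k| = 1.
Proof.
rewrite /cpt normf_div.
have -> : (k%:R - 'i : C) = (k%:R + 'i)^*.
  by rewrite rmorphD /= conjCi rmorph_nat.
by rewrite norm_conjC divff // normr_eq0 cpt_num.
Qed.

Lemma cpt_inj : injective cpt.
Proof.
move=> a b; rewrite /cpt => /eqP; rewrite eqr_div ?cpt_den // => /eqP H.
have : (2 * 'i * (b%:R - a%:R) : C) = 0.
  by rewrite -[RHS](subrr ((a%:R + 'i) * (b%:R - 'i))) {2}H; ring.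
move/eqP; rewrite !mulf_eq0 pnatr_eq0 /= (negPf (@neq0Ci C)) /= subr_eq0 eqr_nat.
by move/eqP.
Qed.

End P2.

Section P2b.
Variable C : numClosedFieldType.

Lemma map_mx_pow (f : {rmorphism {poly C} -> C}) n (M : 'M[{poly C}]_n.+1) m :
  map_mx f (M ^+ m) = (map_mx f M) ^+ m.
Proof.
elim: m => [|m IH]; first by rewrite !expr0 map_mx1.
by rewrite !exprS -!mulmxE map_mxM IH.
Qed.

Lemma poly_step n (A B : 'M[C]_n.+1) m (K : C) : (0 < m)%N ->
  (forall w : C, `|w| = 1 -> \tr ((A + (w ^+ 2) *: B) ^+ m) = (2 * w) ^+ m * K) ->
  \tr (A ^+ m) = 0.
Proof.
move=> m0 HK.
pose M : 'M[{poly C}]_n.+1 := map_mx polyC A + 'X^2 *: map_mx polyC B.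
have evM : forall w : C, map_mx (horner_eval w) M = A + (w ^+ 2) *: B.
  move=> w; apply/matrixP => i j; rewrite !mxE /= horner_evalE.
  by rewrite hornerD hornerM hornerXn !hornerC.
pose Q := \tr (M ^+ m) - ((2 ^+ m * K) *: 'X^m).
have evQ : forall w : C, Q.[w] = \tr ((A + (w ^+ 2) *: B) ^+ m) - (2 * w) ^+ m * K.
  move=> w; rewrite /Q hornerD hornerN -(evM w) -map_mx_pow trace_map_mx.
  congr (_ - _).
  by rewrite hornerZ hornerXn exprMn mulrAC.
have Q0 : Q = 0.
  apply/eqP/negP => /negP Qn0.
  have := @max_poly_roots _ Q (map (@cpt C) (iota 0 (size Q))) Qn0.
  rewrite size_map size_iota ltnn => H; suff: false by []; apply: H.
    apply/allP => x /mapP [k _ ->]; rewrite /root evQ HK ?subrr //.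
    exact: cpt_norm.
  rewrite map_inj_uniq ?iota_uniq //; exact: cpt_inj.
have := evQ 0; rewrite Q0 horner0 expr0n /= scale0r addr0 mulr0 expr0n.
by rewrite (negPf (lt0n_neq0 m0)) mul0r subr0 => <-.
Qed.
End P2b.


Section LP.
Variable C : numClosedFieldType.
Variable N : nat.
Variables (d : 'I_N.+1 -> C) (s : 'I_N.+1 -> 'I_N.+1).
Hypothesis dr : forall i, d i \is Num.real.
Hypothesis sinj : injective s.
Hypothesis ssort : forall i j : 'I_N.+1, (i <= j)%N -> d (s j) <= d (s i).

Definition cind (k : nat) (j : 'I_N.+1) : C := (j < k)%:R.

Lemma LP (q : 'I_N.+1 -> C) k : (k <= N.+1)%N ->
  (forall i, 0 <= q i <= 1) -> \sum_i q i = \sum_j cind k j ->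
  \sum_i d i * q i <= \sum_j cind k j * d (s j).
Proof.
move=> kN qb qs.
pose t := d (s (inord k.-1)).
have Hlt : forall j : 'I_N.+1, (j < k)%N -> t <= d (s j).
  move=> j jk; apply: ssort; rewrite inordK; last by rewrite (leq_trans _ kN) // ltn_predL (leq_ltn_trans _ jk).
  by rewrite -ltnS prednK // (leq_ltn_trans _ jk).
have Hge : forall j : 'I_N.+1, (k <= j)%N -> d (s j) <= t.
  move=> j jk; apply: ssort; case: k kN jk {Hlt t qs} => [|k] kN jk.
    by rewrite /= (_ : inord 0 = ord0) //; apply: val_inj; rewrite /= inordK.
  by rewrite /= inordK // ltnW.
rewrite (reindex_inj sinj) /= -subr_ge0 -sumrB.
have qs' : \sum_j q (s j) = \sum_j cind k j by rewrite -qs [RHS](reindex_inj sinj).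
have -> : \sum_j (cind k j * d (s j) - d (s j) * q (s j)) =
   \sum_j ((cind k j - q (s j)) * (d (s j) - t) + t * (cind k j - q (s j))).
  by apply: eq_bigr => j _; ring.
rewrite big_split /= -mulr_sumr sumrB qs' subrr mulr0 addr0.
apply: sumr_ge0 => j _; rewrite /cind.
case: (ltnP j k) => jk /=.
  by apply: mulr_ge0; rewrite ?subr_ge0 ?Hlt //; case/andP: (qb (s j)).
rewrite sub0r mulNr -mulrN opprB; apply: mulr_ge0; rewrite ?subr_ge0 ?Hge //.
by case/andP: (qb (s j)).
Qed.
End LP.
Arguments cind {C N} k j.

Section Sort.
Variable C : numClosedFieldType.
Variable N : nat.

Lemma exists_sort (d : 'I_N.+1 -> C) : (forall i, d i \is Num.real) ->
  exists s : 'I_N.+1 -> 'I_N.+1, injective s /\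
    forall i j : 'I_N.+1, (i <= j)%N -> d (s j) <= d (s i).
Proof.
move=> dr.
pose r := fun i j : 'I_N.+1 => d j <= d i.
pose l := sort r (enum 'I_N.+1).
have sz : size l = N.+1 by rewrite size_sort size_enum_ord.
have ul : uniq l by rewrite sort_uniq enum_uniq.
have tr : transitive r by move=> a b c; rewrite /r => H1 H2; apply: le_trans H2 H1.
have tot : total r by move=> a b; rewrite /r; apply: real_leVge.
have so : sorted r l by apply: sort_sorted.
exists (fun j => nth ord0 l j); split.
  move=> a b /eqP; rewrite nth_uniq ?sz // => /eqP; apply: val_inj.
move=> i j; rewrite leq_eqVlt => /orP [/eqP H|H].
  by rewrite (val_inj H).
by apply: (sorted_ltn_nth tr ord0 so); rewrite ?inE ?sz.
Qed.
End Sort.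

Local Open Scope sesquilinear_scope.

Section Spec.
Variable C : numClosedFieldType.
Variable N : nat.

Definition av (M : 'M[C]_N.+1) (x : 'cV[C]_N.+1) : C := (adjv x *m M *m x) 0 0.

Lemma adjv_mul (M : 'M[C]_N.+1) x : adjv (M *m x) = adjv x *m M ^t*.
Proof. rewrite /adjv map_mxM trmx_mul -map_trmx; congr (_ *m _). Qed.

Variables (P : 'M[C]_N.+1) (d : 'rV[C]_N.+1).
Hypothesis Pu : P \is unitarymx.
Let H := invmx P *m diag_mx d *m P.

Lemma av_diag x : av H x = \sum_i d 0 i * `|(P *m x) i 0| ^+ 2.
Proof.
rewrite /av /H invmx_unitary // !mulmxA -adjv_mul -mulmxA.
rewrite mxE; apply: eq_bigr => i _.
by rewrite mul_mx_diag !mxE normCK; ring.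
Qed.

Lemma frame_mx (x : 'I_N.+1 -> 'cV[C]_N.+1) :
  orthonormal_family x -> (\matrix_(i, j) x j i 0) ^t* *m (\matrix_(i, j) x j i 0) = 1%:M.
Proof.
move=> Ho; apply/matrixP => a b; rewrite [RHS]mxE -(Ho a b) !mxE; apply: eq_bigr => i _.
by rewrite !mxE.
Qed.

Lemma unitary_tP : P ^t* *m P = 1%:M.
Proof. by apply: mulmx1C; apply/unitarymxP. Qed.

Lemma kyfan_ub (s : 'I_N.+1 -> 'I_N.+1) (x : 'I_N.+1 -> 'cV[C]_N.+1) k :
  injective s -> (forall i j : 'I_N.+1, (i <= j)%N -> d 0 (s j) <= d 0 (s i)) ->
  orthonormal_family x -> (k <= N.+1)%N ->
  \sum_j cind k j * av H (x j) <= \sum_j cind k j * d 0 (s j).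
Proof.
move=> sinj ssort Ho kN.
pose X := \matrix_(i, j) x j i 0.
pose Y := P *m X.
have YtY : Y ^t* *m Y = 1%:M.
  rewrite /Y trmx_mul map_mxM -mulmxA (mulmxA (P ^t*)) unitary_tP mul1mx.
  exact: frame_mx.
have YYt : Y *m Y ^t* = 1%:M by apply: mulmx1C.
have Yx : forall i j, (P *m x j) i 0 = Y i j.
  by move=> i j; rewrite !mxE; apply: eq_bigr => l _; rewrite mxE.
pose wt i j := `|Y i j| ^+ 2.
have wt0 : forall i j, 0 <= wt i j by move=> i j; apply: exprn_ge0.
have col1 : forall j, \sum_i wt i j = 1.
  move=> j; have := congr1 (fun M : 'M[C]_N.+1 => M j j) YtY; rewrite /= !mxE eqxx /= mulr1n => <-.
  by apply: eq_bigr => i _; rewrite /wt normCK !mxE mulrC.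
have row1 : forall i, \sum_j wt i j = 1.
  move=> i; have := congr1 (fun M : 'M[C]_N.+1 => M i i) YYt; rewrite /= !mxE eqxx /= mulr1n => <-.
  by apply: eq_bigr => j _; rewrite /wt normCK !mxE.
have -> : \sum_j cind k j * av H (x j) = \sum_i d 0 i * \sum_j cind k j * wt i j.
  under eq_bigr => j _ do rewrite av_diag mulr_sumr.
  rewrite exchange_big /=; apply: eq_bigr => i _; rewrite mulr_sumr.
  by apply: eq_bigr => j _; rewrite Yx /wt; ring.
apply: (LP (d := fun i => d 0 i)) => //.
- move=> i; apply/andP; split.
    by apply: sumr_ge0 => j _; rewrite mulr_ge0 // /cind ler0n.
  rewrite -(row1 i); apply: ler_sum => j _; rewrite /cind.
  by case: (j < k)%N; rewrite ?mul1r ?mul0r.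
- rewrite exchange_big /=; apply: eq_bigr => j _.
  by rewrite -mulr_sumr col1 mulr1.
Qed.

Definition xs (s : 'I_N.+1 -> 'I_N.+1) (j : 'I_N.+1) : 'cV[C]_N.+1 := (row (s j) P) ^t*.

Lemma adjv_xs s j : adjv (xs s j) = row (s j) P.
Proof. by rewrite /adjv /xs map_mxCK trmxK. Qed.

Lemma dot_rows i b : (row i P *m (row b P) ^t*) 0 0 = (i == b)%:R.
Proof. by rewrite -dotmxE; move/row_unitarymxP: Pu; apply. Qed.

Lemma xs_ortho s : injective s -> orthonormal_family (xs s).
Proof.
move=> sinj a b; rewrite adjv_xs /xs dot_rows (inj_eq sinj) //.
Qed.

Lemma Pv_row (v : 'cV[C]_N.+1) i : (P *m v) i 0 = (row i P *m v) 0 0.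
Proof. by rewrite -row_mul !mxE. Qed.

Lemma av_xs s j : av H (xs s j) = d 0 (s j).
Proof.
rewrite av_diag (bigD1 (s j)) //= big1 ?addr0.
  by rewrite Pv_row dot_rows eqxx normr1 expr1n mulr1.
move=> i ni; rewrite Pv_row dot_rows (negPf ni).
by rewrite normr0 expr0n mulr0.
Qed.

Lemma diag_pow m : (diag_mx d) ^+ m = diag_mx (\row_j (d 0 j ^+ m)).
Proof.
elim: m => [|m IH].
  rewrite expr0; apply/matrixP => i j; rewrite !mxE expr0.
  by case: (i == j).
by rewrite exprS IH -mulmxE mulmx_diag; congr diag_mx; apply/rowP => j; rewrite !mxE exprS.
Qed.

Lemma tr_Hpow m : \tr (H ^+ m) = \sum_i d 0 i ^+ m.
Proof.
have Pun : P \in unitmx by apply: unitarymx_unit.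
have Pin : invmx P \in unitmx by rewrite unitmx_inv.
rewrite /H -{2}(invmxK P) conj_powmx // mxtrace_mulC mulmxA mulVmx // mul1mx.
by rewrite diag_pow mxtrace_diag; apply: eq_bigr => i _; rewrite mxE.
Qed.
End Spec.


Section Main.
Variable C : numClosedFieldType.
Variable N : nat.
Variable A : 'M[C]_N.+1.

Definition Hw (w : C) : 'M[C]_N.+1 := 2^-1 *: (w^* *: A + w *: A ^t*).

Lemma adjvK (x : 'cV[C]_N.+1) : (adjv x) ^t* = x.
Proof. by rewrite /adjv trmxK map_mxCK. Qed.

Lemma av_star x : av (A ^t*) x = (av A x)^*.
Proof.
rewrite /av -{2}(adjvK x) -{4}(adjvK x).
have -> : adjv x *m A ^t* *m (adjv x) ^t* = (adjv x *m A *m (adjv x) ^t*) ^t*.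
  by rewrite !trmx_mul !map_mxM trmxCK mulmxA.
by rewrite !mxE.
Qed.

Lemma av_H w x : av (Hw w) x = 'Re (w^* * av A x).
Proof.
have Ed : forall (M1 M2 : 'M[C]_1) (a b c : C),
    (c *: (a *: M1 + b *: M2)) 0 0 = c * (a * M1 0 0 + b * M2 0 0).
  by move=> *; rewrite !mxE.
rewrite /av /Hw -scalemxAr -scalemxAl mulmxDr mulmxDl -!scalemxAr -!scalemxAl Ed.
rewrite -/(av A x) -/(av (A ^t*) x) av_star ReE rmorphM /= conjCK.
by rewrite mulrC.
Qed.


Lemma Hw_herm w : Hw w \is hermsymmx.
Proof.
rewrite is_hermitianmxE expr0 scale1r; apply/eqP/matrixP => i j.
rewrite !mxE /= !rmorphM rmorphD /= !rmorphM /= !conjCK fmorphV /= rmorph_nat.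
by rewrite addrC.
Qed.

Let P w := spectralmx (Hw w).
Let d w := spectral_diag (Hw w).

Lemma Hw_dec w : Hw w = invmx (P w) *m diag_mx (d w) *m (P w).
Proof. by apply/orthomx_spectralP; apply: hermitian_normalmx; apply: Hw_herm. Qed.

Lemma d_real w i : d w 0 i \is Num.real.
Proof. by have /mxOverP := hermitian_spectral_diag_real (Hw_herm w); apply. Qed.

Lemma Pw_unitary w : P w \is unitarymx.
Proof. exact: spectral_unitarymx. Qed.

Lemma Re_csum w k (F : 'I_N.+1 -> C) :
  'Re (w^* * \sum_j cind k j * F j) = \sum_j cind k j * 'Re (w^* * F j).
Proof.
rewrite mulr_sumr raddf_sum; apply: eq_bigr => j _.
by rewrite mulrCA /= [LHS]ReMl // /cind realn.
Qed.

Hypothesis hyp : forall c : 'I_N.+1 -> C, real_vec c -> is_closed_disc0 (c_numrange c A).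

Lemma key w (s : 'I_N.+1 -> 'I_N.+1) k r : `|w| = 1 -> injective s ->
  (forall i j : 'I_N.+1, (i <= j)%N -> d w 0 (s j) <= d w 0 (s i)) ->
  (k <= N.+1)%N ->
  (forall z, c_numrange (cind k) A z <-> `|z| <= r) -> 0 <= r ->
  \sum_j cind k j * d w 0 (s j) = r.
Proof.
move=> w1 sinj ssort kN Hr r0.
have Hdec := Hw_dec w.
apply/eqP; rewrite eq_le; apply/andP; split.
  set z := \sum_j cind k j * av A (xs (P w) s j).
  have zin : c_numrange (cind k) A z.
    by exists (xs (P w) s); split; [apply: xs_ortho => //; apply: Pw_unitary|].
  have := (Hr z).1 zin; apply: le_trans.
  have -> : \sum_j cind k j * d w 0 (s j) = 'Re (w^* * z).
    rewrite Re_csum; apply: eq_bigr => j _; rewrite -av_H Hdec av_xs //.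
    exact: Pw_unitary.
  apply: le_trans (leif_Re_Creal _).1 _.
  by rewrite normrM norm_conjC w1 mul1r.
have : c_numrange (cind k) A (w * r) by apply/Hr; rewrite normrM w1 mul1r ger0_norm.
case=> x [xo xz].
have -> : r = 'Re (w^* * (w * r)).
  rewrite mulrA (mulrC w^*) -normCK w1 expr1n mul1r.
  by apply/esym/Creal_ReP; apply: ger0_real.
rewrite xz Re_csum.
under eq_bigr => j _ do rewrite -av_H.
rewrite Hdec; apply: kyfan_ub => //; exact: Pw_unitary.
Qed.
End Main.


Section Final.
Variable C : numClosedFieldType.
Variable N : nat.
Variable A : 'M[C]_N.+1.
Hypothesis hyp : forall c : 'I_N.+1 -> C, real_vec c -> is_closed_disc0 (c_numrange c A).

Lemma cind_diff (e : 'I_N.+1 -> C) j :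
  e j = \sum_i cind j.+1 i * e i - \sum_i cind j i * e i.
Proof.
rewrite -sumrB (bigD1 j) //= big1 ?addr0.
  by rewrite /cind ltnSn ltnn -mulrBl subr0 mul1r.
move=> i ij; rewrite /cind ltnS -mulrBl leq_eqVlt.
have -> : (nat_of_ord i == nat_of_ord j) = false by apply/negbTE.
by rewrite /= subrr mul0r.
Qed.

Lemma tr_const w w' m : `|w| = 1 -> `|w'| = 1 ->
  \tr (Hw A w ^+ m) = \tr (Hw A w' ^+ m).
Proof.
move=> w1 w'1.
rewrite (Hw_dec A w) (Hw_dec A w') !tr_Hpow; try exact: Pw_unitary.
have [s [sinj ss]] := exists_sort (d_real A w).
have [s' [sinj' ss']] := exists_sort (d_real A w').
rewrite (reindex_inj sinj) [RHS](reindex_inj sinj') /=.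
apply: eq_bigr => j _; congr (_ ^+ _).
have [r1 [r10 Hr1]] := @hyp (cind j) (fun i => @realn C _).
have [r2 [r20 Hr2]] := @hyp (cind j.+1) (fun i => @realn C _).
rewrite (cind_diff (fun i => spectral_diag (Hw A w) 0 (s i))).
rewrite (cind_diff (fun i => spectral_diag (Hw A w') 0 (s' i))).
have jN : (j <= N.+1)%N by apply: ltnW.
rewrite (key w1 sinj ss jN Hr1 r10) (key w'1 sinj' ss' jN Hr1 r10).
by rewrite (key w1 sinj ss _ Hr2 r20) // (key w'1 sinj' ss' _ Hr2 r20).
Qed.

Lemma final_nil : A ^+ N.+1 = 0.
Proof.
apply: nil_of_traces => m m0.
apply: (@poly_step _ _ A (A ^t*) m (\tr (Hw A 1 ^+ m)) m0) => w w1.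
have ww : w * w^* = 1 by rewrite -normCK w1 expr1n.
have -> : A + w ^+ 2 *: A ^t* = (2 * w) *: Hw A w.
  apply/matrixP => i j; rewrite /Hw !mxE.
  rewrite -{1}[A i j]mul1r -ww; field.
  have wn0 : w != 0 by rewrite -normr_eq0 w1 oner_eq0.
  by rewrite /= conjC_eq0 wn0.
by rewrite exprZn mxtraceZ (@tr_const w 1 m w1) // normr1.
Qed.
End Final.


Unset Implicit Arguments.
Local Open Scope ring_scope.

Theorem mainTheorem17 (C : numClosedFieldType) (n : nat) (A : 'M[C]_n) :
  (forall c : 'I_n -> C, real_vec c -> is_closed_disc0 (c_numrange c A)) ->
  mx_nilpotent A.
Proof.
case: n A => [|n] A hyp.
  by exists 0%N; apply/matrixP => -[].
by exists n.+1; apply: (final_nil hyp).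
Qed.
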